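(* Let $\phi$ be a Drinfeld $A[\underline{t}_s]$-module over $\mathbb{T}_s$ with $\phi_\theta=\theta+A_1\tau+\dots+A_r\tau^r$, $A_r\in\mathbb{T}_s^\times$, and suppose $\Psi\in\mathrm{GL}_r(\mathbb{T}_s\{z/\theta\})$ satisfies $\Psi^{(-1)}=\Phi\Psi$. Set \[ V_\phi=\{\mathbf{g}\in\mathrm{Mat}_{1\times r}(\mathbb{T}_s\{z/\theta\}) \mid \mathbf{g}^{(-1)}\Phi=\mathbf{g}\}. \] Then: (a) $V_\phi=\mathrm{Mat}_{1\times r}(\mathbb{F}_q[\underline{t}_s][z])\,\Psi^{-1}$; (b) $V_\phi$ is a free $\mathbb{F}_q[\underline{t}_s][z]$-module of rank $r$; (c) $V_\phi\cap\mathrm{Mat}_{1\times r}(\mathbb{T}_s[z])=\{0\}$.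
   Context: $\mathbb{F}_q$ finite field, $\theta,t_1,\dots,t_s,z$ independent variables, $A[\underline{t}_s]=\mathbb{F}_q[\theta,t_1,\dots,t_s]$, $\mathbb{F}_q[\underline{t}_s]=\mathbb{F}_q[t_1,\dots,t_s]$. $\mathbb{C}_\infty$: completion of an algebraic closure of $\mathbb{F}_q((1/\theta))$, $|\theta|_\infty=q$. $\mathbb{T}_s$: Tate algebra of power series in $t_1,\dots,t_s$ over $\mathbb{C}_\infty$ with coefficients tending to $0$, Gauss norm $\|\cdot\|_\infty$. $\tau$: automorphism raising $\mathbb{C}_\infty$-coefficients to the $q$-th power, $f^{(n)}=\tau^n(f)$ ($n\in\mathbb{Z}$), applied entrywise to matrices and coefficientwise to power series in $z$ (fixing $z$). $\mathbb{T}_s[\tau]$: twisted polynomial ring with $\tau f=f^{(1)}\tau$. A Drinfeld $A[\underline{t}_s]$-module is an $\mathbb{F}_q[\underline{t}_s]$-algebra homomorphism $\phi:A[\underline{t}_s]\to\mathbb{T}_s[\tau]$ with $\phi_\theta=\theta+A_1\tau+\dots+A_r\tau^r$. $\mathbb{T}_s\{z/\theta\}=\{\sum_{i\ge0}a_iz^i: a_i\in\mathbb{T}_s,\ q^i\|a_i\|_\infty\to0\}$. $\Phi\in\mathrm{Mat}_r(\mathbb{T}_s[z])$ has $i$-th row the $(i+1)$-st standard basis row vector for $1\le i\le r-1$ and last row $\big[(z-\theta)/A_r^{(-r)},-A_1^{(-1)}/A_r^{(-r)},\dots,-A_{r-1}^{(-r+1)}/A_r^{(-r)}\big]$. *)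

(* Defs.v *)
From HB Require Import structures.
From mathcomp Require Import all_boot all_order all_algebra.
From mathcomp Require Import reals.
From Stdlib Require Import ClassicalEpsilon.

Set Implicit Arguments.
Unset Strict Implicit.
Unset Printing Implicit Defensive.

Import Order.TTheory GRing.Theory Num.Theory.
Local Open Scope ring_scope.

(* Abstract model of C_infty: a field C with a ring embedding iota : F_q -> C,
   an element theta, and a real-valued absolute value nrm such that
   nrm is a non-archimedean absolute value with |theta| = q, C is complete,
   algebraically closed (closedFieldType) and the elements algebraic over
   F_q(theta) are dense.  These axioms characterize C_infty up to isometric
   isomorphism. *)
Record Cinf_axioms (F : finFieldType) (C : closedFieldType) (R : realType)
    (iota : {rmorphism F -> C}) (theta : C) (nrm : C -> R) : Prop := {
  nrm_ge0 : forall x, 0 <= nrm x;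
  nrm0 : nrm 0 = 0;
  nrm_eq0 : forall x, nrm x = 0 -> x = 0;
  nrmM : forall x y, nrm (x * y) = nrm x * nrm y;
  nrm_ultra : forall x y, nrm (x + y) <= Num.max (nrm x) (nrm y);
  nrm_theta : nrm theta = (#|F|)%:R;
  nrm_complete : forall u : nat -> C,
    (forall eps : R, 0 < eps -> exists N, forall m n, (N <= m)%N -> (N <= n)%N ->
        nrm (u m - u n) < eps) ->
    exists l, forall eps : R, 0 < eps -> exists N, forall n, (N <= n)%N ->
        nrm (u n - l) < eps;
  alg_dense : forall (x : C) (eps : R), 0 < eps -> exists y : C,
    nrm (x - y) < eps /\
    exists p : {poly {poly F}},
      map_poly (fun c : {poly F} => (map_poly iota c).[theta]) p != 0 /\
      root (map_poly (fun c : {poly F} => (map_poly iota c).[theta]) p) y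
}.

(* Formal power series in z, t_1..t_s over C.  A series a is given by its
   coefficients: a i m = coefficient of z^i t^m (m a multi-index). *)
Section Series.
Variables (C : fieldType) (s : nat).

Definition midx := 'I_s -> nat.
Definition ser := nat -> midx -> C.

Definition ser0 : ser := fun _ _ => 0.
Definition ser1 : ser := fun i m => if (i == 0%N) && [forall j, m j == 0%N] then 1 else 0.
Definition sercst (c : C) : ser :=
  fun i m => if (i == 0%N) && [forall j, m j == 0%N] then c else 0.
Definition serz : ser := fun i m => if (i == 1%N) && [forall j, m j == 0%N] then 1 else 0.
Definition seradd (a b : ser) : ser := fun i m => a i m + b i m.
Definition seropp (a : ser) : ser := fun i m => - a i m.

Definition mbound (m : midx) : nat := (\sum_(j < s) m j)%N.

Definition sermul (a b : ser) : ser := fun i m =>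
  \sum_(k < i.+1)
    \sum_(mu : {ffun 'I_s -> 'I_(mbound m).+1} | [forall j, (mu j <= m j)%N])
      a k (fun j => nat_of_ord (mu j)) * b (i - k)%N (fun j => (m j - mu j)%N).

Definition tinv (a : ser) : ser := epsilon (inhabits ser0) (fun b => sermul a b = ser1).

End Series.
Arguments ser0 : clear implicits.
Arguments ser1 : clear implicits.
Arguments serz : clear implicits.
Arguments sercst {C} s c.

(* tau^{-1}: inverse of the q-Frobenius on C (bijective as C is algebraically
   closed of characteristic p), applied coefficientwise; twistinv k = tau^{-k}. *)
Definition frobinv (C : fieldType) (q : nat) (x : C) : C :=
  epsilon (inhabits 0) (fun y : C => y ^+ q = x).

Definition twistinv (C : fieldType) (s q k : nat) (a : ser C s) : ser C s :=
  fun i m => iter k (frobinv q) (a i m).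

Section Subrings.
Variables (C : fieldType) (R : realType) (nrm : C -> R) (s : nat).

Definition tate_coef (b : midx s -> C) : Prop :=
  forall eps : R, 0 < eps -> exists N : nat,
    forall m : midx s, (exists j, (N <= m j)%N) -> nrm (b m) < eps.

Definition in_T (a : ser C s) : Prop :=
  tate_coef (a 0%N) /\ forall i, i <> 0%N -> forall m, a i m = 0.

Definition in_Tz (q : nat) (a : ser C s) : Prop :=
  (forall i, tate_coef (a i)) /\
  forall eps : R, 0 < eps -> exists N : nat, forall i, (N <= i)%N ->
    forall m, (q%:R) ^+ i * nrm (a i m) <= eps.

Definition in_Tpolz (a : ser C s) : Prop :=
  (forall i, tate_coef (a i)) /\
  exists N : nat, forall i, (N <= i)%N -> forall m, a i m = 0.

End Subrings.

Definition in_Fqtz (F : finFieldType) (C : fieldType) (s : nat) (iota : F -> C)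
    (a : ser C s) : Prop :=
  (forall i m, exists c : F, a i m = iota c) /\
  exists N : nat, forall i (m : midx s), ((N <= i)%N \/ exists j, (N <= m j)%N) ->
    a i m = 0.

Section Matrices.
Variables (C : fieldType) (s r : nat).

Definition rowmul (g : 'I_r -> ser C s) (P : 'I_r -> 'I_r -> ser C s) : 'I_r -> ser C s :=
  fun j i m => \sum_(k < r) sermul (g k) (P k j) i m.

Definition matmul (P Q : 'I_r -> 'I_r -> ser C s) : 'I_r -> 'I_r -> ser C s :=
  fun a b i m => \sum_(k < r) sermul (P a k) (Q k b) i m.

Definition idm : 'I_r -> 'I_r -> ser C s := fun a b => if a == b then ser1 C s else ser0 C s.

Definition lincomb (c : 'I_r -> ser C s) (b : 'I_r -> 'I_r -> ser C s) : 'I_r -> ser C s :=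
  fun j i m => \sum_(k < r) sermul (c k) (b k j) i m.

Definition twistv (q k : nat) (g : 'I_r -> ser C s) : 'I_r -> ser C s :=
  fun j => twistinv q k (g j).
Definition twistm (q k : nat) (P : 'I_r -> 'I_r -> ser C s) : 'I_r -> 'I_r -> ser C s :=
  fun a b => twistinv q k (P a b).

(* The matrix Phi attached to phi_theta = theta + A_1 tau + ... + A_r tau^r
   (A k is A_k, for 1 <= k <= r).  Rows 0..r-2 (0-indexed) are the shifted
   standard basis vectors; the last row is
   [(z - theta)/A_r^(-r), -A_1^(-1)/A_r^(-r), ..., -A_(r-1)^(-r+1)/A_r^(-r)]. *)
Definition Phi (q : nat) (theta : C) (A : nat -> ser C s) : 'I_r -> 'I_r -> ser C s :=
  fun i j =>
    if (i.+1 < r)%N then (if (j == i.+1 :> nat) then ser1 C s else ser0 C s)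
    else
      let d := tinv (twistinv q r (A r)) in
      if (j == 0%N :> nat) then sermul (seradd (serz C s) (sercst s (- theta))) d
      else sermul (seropp (twistinv q j (A j))) d.

End Matrices.

Definition Vphi (C : fieldType) (R : realType) (nrm : C -> R) (s r q : nat)
    (theta : C) (A : nat -> ser C s) (g : 'I_r -> ser C s) : Prop :=
  (forall j, in_Tz nrm q (g j)) /\ rowmul (twistv q 1 g) (Phi q theta A) = g.

(* Main.v *)
Require Import Defs.
From HB Require Import structures.
From mathcomp Require Import all_boot all_order all_algebra.
From mathcomp Require Import reals boolp.
From mathcomp Require Import zify.
From Stdlib Require Import ClassicalEpsilon.
Set Implicit Arguments.
Unset Strict Implicit.
Unset Printing Implicit Defensive.
Import Order.TTheory GRing.Theory Num.Theory.
Local Open Scope ring_scope.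
Section Box.
Variables (C : fieldType) (s : nat).
Local Notation midx := (midx s).

Definition vb B (mu : {ffun 'I_s -> 'I_B.+1}) : midx := fun j => nat_of_ord (mu j).
Definition tobox B (m : midx) : {ffun 'I_s -> 'I_B.+1} := [ffun j => inord (m j)].
Definition bnd B (m : midx) := [forall j, (m j <= B)%N].
Definition mle (mu m : midx) := [forall j, (mu j <= m j)%N].

Lemma vb_tobox B m : bnd B m -> vb (tobox B m) = m.
Proof. by move=> /forallP H; apply: funext => j; rewrite /vb ffunE inordK // ltnS H. Qed.

Lemma tobox_vb B mu : tobox B (vb mu) = mu.
Proof. by apply/ffunP => j; rewrite ffunE /vb inord_val. Qed.

Lemma bnd_vb B mu : bnd B (@vb B mu).
Proof. by apply/forallP => j; rewrite /vb -ltnS. Qed.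

Lemma box_reindex B1 B2 (P1 P2 : pred midx) (h h' : midx -> midx) (G : midx -> C) :
  (forall mu, bnd B1 mu -> P1 mu -> [/\ P2 (h mu), h' (h mu) = mu & bnd B2 (h mu)]) ->
  (forall nu, bnd B2 nu -> P2 nu -> [/\ P1 (h' nu), h (h' nu) = nu & bnd B1 (h' nu)]) ->
  \sum_(mu : {ffun 'I_s -> 'I_B1.+1} | P1 (vb mu)) G (h (vb mu)) =
  \sum_(nu : {ffun 'I_s -> 'I_B2.+1} | P2 (vb nu)) G (vb nu).
Proof.
move=> H1 H2.
rewrite (reindex_onto (fun mu : {ffun 'I_s -> 'I_B1.+1} => tobox B2 (h (vb mu)))
                      (fun nu : {ffun 'I_s -> 'I_B2.+1} => tobox B1 (h' (vb nu)))) /=; last first.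
  move=> nu Pnu; have [P1n hh bn] := H2 _ (bnd_vb nu) Pnu.
  by rewrite vb_tobox // hh tobox_vb.
apply: eq_big => mu /=.
  apply/idP/andP.
    move=> Pm; have [P2h hh bh] := H1 _ (bnd_vb mu) Pm.
    by rewrite vb_tobox // hh tobox_vb P2h.
  case=> Pa /eqP Ea.
  have bh : bnd B2 (vb (tobox B2 (h (vb mu)))) by apply: bnd_vb.
  have [P1n hh bn] := H2 _ bh Pa.
  by rewrite -Ea vb_tobox.
move=> Pm; have [P2h hh bh] := H1 _ (bnd_vb mu) Pm.
by rewrite vb_tobox.
Qed.

End Box.
Section TS.
Variables (C : fieldType) (s : nat).
Local Notation midx := (midx s).
Local Notation box B := {ffun 'I_s -> 'I_B.+1}.

Definition tmul (f g : midx -> C) (m : midx) : C :=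
  \sum_(mu : {ffun 'I_s -> 'I_(mbound m).+1} | [forall j, (mu j <= m j)%N])
      f (fun j => nat_of_ord (mu j)) * g (fun j => (m j - mu j)%N).

Lemma sermulE (a b : ser C s) i m : sermul a b i m = \sum_(k < i.+1) tmul (a k) (b (i - k)%N) m.
Proof. by []. Qed.

Lemma mbound_ge (m : midx) j : (m j <= mbound m)%N.
Proof. by rewrite /mbound (bigD1 j) //= leq_addr. Qed.

Lemma bnd_mle B (mu m : midx) : bnd B m -> mle mu m -> bnd B mu.
Proof.
move=> /forallP H1 /forallP H2; apply/forallP => j; exact: leq_trans (H2 j) (H1 j).
Qed.

Lemma bnd_mbound (m : midx) : bnd (mbound m) m.
Proof. by apply/forallP => j; apply: mbound_ge. Qed.

Definition msub (m mu : midx) : midx := fun j => (m j - mu j)%N.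
Definition madd (m mu : midx) : midx := fun j => (m j + mu j)%N.

Lemma tmul_bound B f g (m : midx) : bnd B m ->
  tmul f g m = \sum_(mu : box B | mle (vb mu) m) f (vb mu) * g (msub m (vb mu)).
Proof.
move=> Bm.
have := (@box_reindex C s (mbound m) B (fun x => mle x m) (fun x => mle x m) id id
   (fun mu => f mu * g (msub m mu))).
apply.
  by move=> mu _ H; split => //; apply: bnd_mle Bm H.
by move=> mu _ H; split => //; apply: bnd_mle (bnd_mbound m) H.
Qed.

Lemma tmulC f g m : tmul f g m = tmul g f m.
Proof.
rewrite (tmul_bound _ _ (bnd_mbound m)) (tmul_bound _ _ (bnd_mbound m)).
rewrite -(@box_reindex C s (mbound m) (mbound m) (fun x => mle x m) (fun x => mle x m) (msub m) (msub m)
   (fun mu => g mu * f (msub m mu))).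
- apply: eq_bigr => mu /forallP H; rewrite mulrC; congr (_ * f _).
  by apply: funext => j; rewrite /msub subKn.
- move=> mu _ /forallP H; split.
  + by apply/forallP => j; rewrite /msub leq_subr.
  + by apply: funext => j; rewrite /msub subKn.
  + by apply/forallP => j; rewrite /msub (leq_trans (leq_subr _ _) (mbound_ge _ _)).
- move=> mu _ /forallP H; split.
  + by apply/forallP => j; rewrite /msub leq_subr.
  + by apply: funext => j; rewrite /msub subKn.
  + by apply/forallP => j; rewrite /msub (leq_trans (leq_subr _ _) (mbound_ge _ _)).
Qed.

End TS.
Section TS2.
Variables (C : fieldType) (s : nat).
Local Notation midx := (midx s).
Local Notation box B := {ffun 'I_s -> 'I_B.+1}.

Lemma tmulA (f g h : midx -> C) m :
  tmul (tmul f g) h m = tmul f (tmul g h) m.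
Proof.
set M := mbound m.
have bM := bnd_mbound m.
rewrite (tmul_bound _ _ bM) (tmul_bound _ _ bM).
under eq_bigr => mu Hmu.
  rewrite (tmul_bound _ _ (bnd_mle bM Hmu)) mulr_suml.
  over.
under [RHS]eq_bigr => nu Hnu.
  have bnu : bnd M (msub m (vb nu)).
    by apply/forallP => j; rewrite /msub (leq_trans (leq_subr _ _) (mbound_ge _ _)).
  rewrite (tmul_bound _ _ bnu) mulr_sumr.
  over.
rewrite /= (exchange_big_dep (fun nu : box M => mle (vb nu) m)) /=; last first.
  move=> mu nu /forallP H1 /forallP H2; apply/forallP => j; exact: leq_trans (H2 j) (H1 j).
apply: eq_bigr => nu /forallP Hnu.
rewrite -(@box_reindex C s M M (fun rho => mle rho (msub m (vb nu)))
   (fun mu => mle mu m && mle (vb nu) mu) (madd (vb nu)) (fun mu => msub mu (vb nu))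
   (fun mu => f (vb nu) * g (msub mu (vb nu)) * h (msub m mu))).
- apply: eq_bigr => rho /forallP Hrho; rewrite -mulrA; congr (_ * (g _ * h _)).
    by apply: funext => j; rewrite /msub /madd addKn.
  by apply: funext => j; rewrite /msub /madd subnDA.
- move=> rho _ /forallP Hr; split.
  + apply/andP; split; apply/forallP => j; rewrite /madd.
      by move: (Hr j) (Hnu j); rewrite /msub; lia.
    by lia.
  + by apply: funext => j; rewrite /msub /madd addKn.
  + apply/forallP => j; rewrite /madd.
    by move: (Hr j) (Hnu j) (mbound_ge m j); rewrite /msub; lia.
- move=> mu _ /andP[/forallP H1 /forallP H2]; split.
  + by apply/forallP => j; rewrite /msub; move: (H1 j) (H2 j); lia.
  + by apply: funext => j; rewrite /msub /madd; move: (H2 j); lia.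
  + apply/forallP => j; rewrite /msub.
    by move: (H1 j) (mbound_ge m j); lia.
Qed.

Definition tone : midx -> C := fun m => if [forall j, m j == 0%N] then 1 else 0.

Lemma tmul1 (f : midx -> C) m : tmul tone f m = f m.
Proof.
rewrite (tmul_bound _ _ (bnd_mbound m)).
set z0 : box (mbound m) := tobox (mbound m) (fun _ => 0%N).
have vz : vb z0 = (fun _ => 0%N) by rewrite vb_tobox //; apply/forallP.
rewrite (bigD1 z0) /=; last by rewrite vz; apply/forallP.
rewrite big1 ?addr0.
  rewrite vz /tone; have -> : [forall j : 'I_s, 0%N == 0%N] by apply/forallP.
  by rewrite mul1r; congr f; apply: funext => j; rewrite /msub subn0.
move=> mu /andP[_ Hne]; rewrite /tone.
case: ifP => [/forallP H|]; last by rewrite mul0r.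
exfalso; move/negP: Hne; apply; apply/eqP/ffunP => j.
apply: val_inj; move: (H j) => /eqP.
by rewrite /z0 ffunE /vb /= inordK.
Qed.

Lemma tmulDl (f g h : midx -> C) m : tmul (fun x => f x + g x) h m = tmul f h m + tmul g h m.
Proof. by rewrite /tmul -big_split; apply: eq_bigr => mu _; rewrite mulrDl. Qed.

End TS2.
Definition tser (C : fieldType) (s : nat) := midx s -> C.
Definition sring (C : fieldType) (s : nat) := ser C s.

Section TSR.
Variables (C : fieldType) (s : nat).
Local Notation T := (tser C s).

HB.instance Definition _ := Choice.copy T (midx s -> C).

Definition tadd (f g : T) : T := fun m => f m + g m.
Definition topp (f : T) : T := fun m => - f m.
Definition tzero : T := fun _ => 0.

Lemma taddA : associative tadd.
Proof. by move=> f g h; apply: funext => m; rewrite /tadd addrA. Qed.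
Lemma taddC : commutative tadd.
Proof. by move=> f g; apply: funext => m; rewrite /tadd addrC. Qed.
Lemma tadd0 : left_id tzero tadd.
Proof. by move=> f; apply: funext => m; rewrite /tadd add0r. Qed.
Lemma taddN : left_inverse tzero topp tadd.
Proof. by move=> f; apply: funext => m; rewrite /tadd /topp addNr. Qed.

HB.instance Definition _ := GRing.isZmodule.Build T taddA taddC tadd0 taddN.

Definition tmul' (f g : T) : T := tmul f g.
Lemma tmulA' : associative tmul'.
Proof. by move=> f g h; apply: funext => m; rewrite /tmul' tmulA. Qed.
Lemma tmulC' : commutative tmul'.
Proof. by move=> f g; apply: funext => m; rewrite /tmul' tmulC. Qed.
Lemma tmul1' : left_id (@tone C s : T) tmul'.
Proof. by move=> f; apply: funext => m; rewrite /tmul' tmul1. Qed.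
Lemma tmulDl' : left_distributive tmul' tadd.
Proof. by move=> f g h; apply: funext => m; rewrite /tmul' tmulDl. Qed.
Lemma tone_neq0 : (@tone C s : T) != tzero.
Proof.
apply/eqP => H; have := congr1 (fun f => f (fun _ => 0%N)) H.
rewrite /tone /tzero /=; have -> : [forall j : 'I_s, 0%N == 0%N] by apply/forallP.
by move/eqP; rewrite oner_eq0.
Qed.

HB.instance Definition _ := GRing.Zmodule_isComNzRing.Build T tmulA' tmulC' tmul1' tmulDl' tone_neq0.

Lemma tmulE (f g : T) : f * g = tmul f g. Proof. by []. Qed.
Lemma taddE (f g : T) m : (f + g) m = f m + g m. Proof. by []. Qed.
Lemma toppE (f : T) m : (- f) m = - f m. Proof. by []. Qed.
Lemma tzeroE m : (0 : T) m = 0. Proof. by []. Qed.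
Lemma toneE : (1 : T) = @tone C s. Proof. by []. Qed.

Lemma tsum_apply (I : Type) (r : seq I) (P : pred I) (F : I -> T) m :
  (\sum_(i <- r | P i) F i) m = \sum_(i <- r | P i) F i m.
Proof. by apply: (big_morph (fun f : T => f m)). Qed.

End TSR.
Section SR.
Variables (C : fieldType) (s : nat).
Local Notation T := (tser C s).
Local Notation S := (sring C s).

HB.instance Definition _ := Choice.copy S (nat -> T).

Lemma sermul_tsum (a b : ser C s) i :
  sermul a b i = \sum_(k < i.+1) ((a k : T) * b (i - k)%N).
Proof. by apply: funext => m; rewrite tsum_apply. Qed.

Lemma sermul_coef (x y : ser C s) (X Y : {poly T}) i :
  (forall k, (k <= i)%N -> X`_k = x k) -> (forall k, (k <= i)%N -> Y`_k = y k) ->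
  (sermul x y i : T) = (X * Y)`_i.
Proof.
move=> HX HY; rewrite sermul_tsum coefM; apply: eq_bigr => k _.
rewrite HX; last by rewrite -ltnS.
by rewrite HY // leq_subr.
Qed.

Definition Pn (N : nat) (a : ser C s) : {poly T} := \poly_(k < N) (a k : T).

Lemma Pn_coef N a k : (k < N)%N -> (Pn N a)`_k = a k.
Proof. by move=> H; rewrite coef_poly H. Qed.

Lemma sermulA : associative (@sermul C s).
Proof.
move=> a b c; apply: funext => i.
pose N := i.+1.
have hA k : (k <= i)%N -> (Pn N a)`_k = a k by move=> H; rewrite Pn_coef.
have hB k : (k <= i)%N -> (Pn N b)`_k = b k by move=> H; rewrite Pn_coef.
have hC k : (k <= i)%N -> (Pn N c)`_k = c k by move=> H; rewrite Pn_coef.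
rewrite (@sermul_coef a (sermul b c) (Pn N a) (Pn N b * Pn N c)) //; last first.
  by move=> k Hk; rewrite (@sermul_coef b c (Pn N b) (Pn N c)) // => l Hl;
     [apply: hB | apply: hC]; apply: leq_trans Hl Hk.
rewrite (@sermul_coef (sermul a b) c (Pn N a * Pn N b) (Pn N c)) ?mulrA //.
by move=> k Hk; rewrite (@sermul_coef a b (Pn N a) (Pn N b)) // => l Hl;
   [apply: hA | apply: hB]; apply: leq_trans Hl Hk.
Qed.

Lemma PnK N a k : (k <= N)%N -> (Pn N.+1 a)`_k = a k.
Proof. by move=> H; rewrite Pn_coef. Qed.

Lemma sermulC : commutative (@sermul C s).
Proof.
move=> a b; apply: funext => i.
rewrite (@sermul_coef a b (Pn i.+1 a) (Pn i.+1 b)); try by move=> k Hk; apply: PnK.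
rewrite mulrC -(@sermul_coef b a) //; by move=> k Hk; apply: PnK.
Qed.

Lemma ser1_lvl i : (ser1 C s i : T) = if i == 0%N then 1 else 0.
Proof. by case: i. Qed.

Lemma sermul1 : left_id (ser1 C s) (@sermul C s).
Proof.
move=> a; apply: funext => i.
rewrite (@sermul_coef (ser1 C s) a 1 (Pn i.+1 a)); last by move=> k Hk; apply: PnK.
  by rewrite mul1r PnK.
by move=> k _; rewrite coefC ser1_lvl.
Qed.

Lemma sermulDl : left_distributive (@sermul C s) (@seradd C s).
Proof.
move=> a b c; apply: funext => i.
have -> : seradd (sermul a c) (sermul b c) i = ((sermul a c i : T) + sermul b c i) by [].
rewrite (@sermul_coef a c (Pn i.+1 a) (Pn i.+1 c)); try by move=> k Hk; apply: PnK.
rewrite (@sermul_coef b c (Pn i.+1 b) (Pn i.+1 c)); try by move=> k Hk; apply: PnK.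
rewrite (@sermul_coef (seradd a b) c (Pn i.+1 a + Pn i.+1 b) (Pn i.+1 c)); try by move=> k Hk; apply: PnK.
  by rewrite mulrDl coefD.
by move=> k Hk; rewrite coefD !PnK.
Qed.

End SR.
Section SR2.
Variables (C : fieldType) (s : nat).
Local Notation T := (tser C s).
Local Notation S := (sring C s).

Lemma saddA : associative (@seradd C s : S -> S -> S).
Proof. by move=> f g h; do 2 apply: funext => ?; rewrite /seradd addrA. Qed.
Lemma saddC : commutative (@seradd C s : S -> S -> S).
Proof. by move=> f g; do 2 apply: funext => ?; rewrite /seradd addrC. Qed.
Lemma sadd0 : left_id (ser0 C s : S) (@seradd C s).
Proof. by move=> f; do 2 apply: funext => ?; rewrite /seradd /ser0 add0r. Qed.
Lemma saddN : left_inverse (ser0 C s : S) (@seropp C s) (@seradd C s).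
Proof. by move=> f; do 2 apply: funext => ?; rewrite /seradd /ser0 /seropp addNr. Qed.

HB.instance Definition _ := GRing.isZmodule.Build S saddA saddC sadd0 saddN.

Lemma sone_neq0 : (ser1 C s : S) != ser0 C s.
Proof.
apply/eqP => H; have := congr1 (fun f : S => f 0%N (fun _ => 0%N)) H.
rewrite /ser1 /ser0 /=; have -> : [forall j : 'I_s, 0%N == 0%N] by apply/forallP.
by move/eqP; rewrite oner_eq0.
Qed.

HB.instance Definition _ := GRing.Zmodule_isComNzRing.Build S
  (@sermulA C s) (@sermulC C s) (@sermul1 C s) (@sermulDl C s) sone_neq0.

Lemma smulE (a b : S) : a * b = sermul a b. Proof. by []. Qed.
Lemma saddE (a b : S) : a + b = seradd a b. Proof. by []. Qed.
Lemma soneE : (1 : S) = ser1 C s. Proof. by []. Qed.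
Lemma szeroE : (0 : S) = ser0 C s. Proof. by []. Qed.

Lemma ssum_apply (I : Type) (r : seq I) (P : pred I) (F : I -> S) i m :
  (\sum_(k <- r | P k) F k) i m = \sum_(k <- r | P k) F k i m.
Proof. by apply: (big_morph (fun f : S => f i m)). Qed.

End SR2.
From mathcomp Require Import finfield.
Section Frob.
Variables (F : finFieldType) (C : closedFieldType) (iota : {rmorphism F -> C}).
Local Notation q := #|F|.
Local Notation fi := (@frobinv C q).

Lemma qnat : [pchar C].-nat q.
Proof.
have [p pp pc] := finPcharP F.
rewrite (card_pprimeChar pc) pnatX pnatE //.
by rewrite (rmorph_pchar iota pc).
Qed.

Lemma q_gt0 : (0 < q)%N.
Proof. by apply/card_gt0P; exists 0. Qed.

Lemma frobD (x y : C) : (x + y) ^+ q = x ^+ q + y ^+ q.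
Proof. exact: exprDn_pchar qnat. Qed.

Lemma frob_inj (x y : C) : x ^+ q = y ^+ q -> x = y.
Proof.
move=> H; apply/eqP; rewrite -subr_eq0; apply/eqP.
have : (x - y) ^+ q = 0.
  have E : (x - y) ^+ q + y ^+ q = y ^+ q by rewrite -frobD subrK H.
  by apply: (addIr (y ^+ q)); rewrite E add0r.
by move/eqP; rewrite expf_eq0 => /andP[_ /eqP].
Qed.

Lemma fi_spec (x : C) : (fi x) ^+ q = x.
Proof.
rewrite /frobinv; apply: (epsilon_spec (inhabits 0) (fun y : C => y ^+ q = x)).
have [y Hy] := @solve_monicpoly C q (fun i => if i == 0%N then x else 0) q_gt0.
exists y; rewrite Hy (bigD1 (Ordinal q_gt0)) //= big1 ?addr0 ?mulr1 // => i Hi.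
have -> : (i == 0%N :> nat) = false by apply/negbTE; rewrite -val_eqE /= in Hi.
by rewrite mul0r.
Qed.

Lemma fi_unique (x y : C) : y ^+ q = x -> fi x = y.
Proof. by move=> H; apply: frob_inj; rewrite fi_spec H. Qed.

Lemma fiD x y : fi (x + y) = fi x + fi y.
Proof. by apply: fi_unique; rewrite frobD !fi_spec. Qed.
Lemma fiM x y : fi (x * y) = fi x * fi y.
Proof. by apply: fi_unique; rewrite exprMn !fi_spec. Qed.
Lemma fi0 : fi 0 = 0.
Proof. by apply: fi_unique; rewrite expr0n; case: q q_gt0. Qed.
Lemma fi1 : fi 1 = 1.
Proof. by apply: fi_unique; rewrite expr1n. Qed.
Lemma fiN x : fi (- x) = - fi x.
Proof. by apply/eqP; rewrite -addr_eq0 -fiD addNr fi0. Qed.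
Lemma fi_inj x y : fi x = fi y -> x = y.
Proof. by move=> H; rewrite -(fi_spec x) -(fi_spec y) H. Qed.

Lemma fi_iota c : fi (iota c) = iota c.
Proof. by apply: fi_unique; rewrite -rmorphXn expf_card. Qed.

Lemma fi_fixed x : fi x = x -> exists c, x = iota c.
Proof.
move=> H; have Hx : x ^+ q = x by rewrite -{1}H fi_spec.
have : root (map_poly iota ('X^q - 'X)) x.
  by rewrite rmorphB /= map_polyXn map_polyX rootE !hornerE Hx subrr.
rewrite finField_genPoly rmorph_prod /= rootE horner_prod => /prodf_eq0 [c _].
rewrite rmorphB /= map_polyX map_polyC hornerXsubC subr_eq0 => /eqP ->.
by exists c.
Qed.

End Frob.
Section Mat.
Variables (C : fieldType) (s r : nat).
Local Notation S := (sring C s).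
Local Notation M := ('I_r -> 'I_r -> ser C s).
Local Notation V := ('I_r -> ser C s).

Lemma matmulE (P Q : M) a b : matmul P Q a b = \sum_(k < r) ((P a k : S) * Q k b).
Proof. by do 2 apply: funext => ?; rewrite ssum_apply. Qed.

Lemma rowmulE (g : V) (P : M) j : rowmul g P j = \sum_(k < r) ((g k : S) * P k j).
Proof. by do 2 apply: funext => ?; rewrite ssum_apply. Qed.

Lemma idmE a b : (@idm C s r a b : S) = if a == b then 1 else 0.
Proof. by rewrite /idm; case: eqP. Qed.

Lemma matmulA (P Q R : M) : matmul (matmul P Q) R = matmul P (matmul Q R).
Proof.
apply: funext => a; apply: funext => b; rewrite !matmulE.
under eq_bigr => k _ do rewrite matmulE mulr_suml.
under [RHS]eq_bigr => k _ do rewrite matmulE mulr_sumr.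
rewrite exchange_big; apply: eq_bigr => l _; apply: eq_bigr => k _.
by rewrite mulrA.
Qed.

Lemma rowmul_matmul (g : V) (P Q : M) : rowmul (rowmul g P) Q = rowmul g (matmul P Q).
Proof.
apply: funext => j; rewrite !rowmulE.
under eq_bigr => k _ do rewrite rowmulE mulr_suml.
under [RHS]eq_bigr => k _ do rewrite matmulE mulr_sumr.
rewrite exchange_big; apply: eq_bigr => l _; apply: eq_bigr => k _.
by rewrite mulrA.
Qed.

Lemma matmul_idm (P : M) : matmul P (@idm C s r) = P.
Proof.
apply: funext => a; apply: funext => b; rewrite matmulE (bigD1 b) //= idmE eqxx mulr1.
rewrite big1 ?addr0 // => k /negPf Hk; by rewrite idmE Hk mulr0.
Qed.

Lemma idm_matmul (P : M) : matmul (@idm C s r) P = P.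
Proof.
apply: funext => a; apply: funext => b; rewrite matmulE (bigD1 a) //= idmE eqxx mul1r.
rewrite big1 ?addr0 // => k; rewrite eq_sym => /negPf Hk; by rewrite idmE Hk mul0r.
Qed.

Lemma rowmul_idm (g : V) : rowmul g (@idm C s r) = g.
Proof.
apply: funext => b; rewrite rowmulE (bigD1 b) //= idmE eqxx mulr1.
rewrite big1 ?addr0 // => k /negPf Hk; by rewrite idmE Hk mulr0.
Qed.

End Mat.
Section Twist.
Variables (F : finFieldType) (C : closedFieldType) (iota : {rmorphism F -> C}) (s r : nat).
Local Notation q := #|F|.
Local Notation fi := (@frobinv C q).
Local Notation S := (sring C s).
Local Notation M := ('I_r -> 'I_r -> ser C s).
Local Notation V := ('I_r -> ser C s).

Definition fk k : C -> C := iter k fi.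
Lemma fkD k x y : fk k (x + y) = fk k x + fk k y.
Proof. by elim: k => //= k IH; rewrite IH (fiD iota). Qed.
Lemma fkM k x y : fk k (x * y) = fk k x * fk k y.
Proof. by elim: k => //= k IH; rewrite IH (fiM iota). Qed.
Lemma fk0 k : fk k 0 = 0.
Proof. by elim: k => //= k IH; rewrite IH (fi0 iota). Qed.
Lemma fk1 k : fk k 1 = 1.
Proof. by elim: k => //= k IH; rewrite IH (fi1 iota). Qed.
Lemma fkN k x : fk k (- x) = - fk k x.
Proof. by elim: k => //= k IH; rewrite IH (fiN iota). Qed.
Lemma fk_inj k x y : fk k x = fk k y -> x = y.
Proof. by elim: k => //= k IH H; apply: IH; apply: (@fi_inj F C). Qed.
Lemma fk_iota k c : fk k (iota c) = iota c.
Proof. by elim: k => //= k ->; rewrite (fi_iota iota). Qed.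

Definition tw k (a : S) : S := twistinv q k a.
Lemma twE k (a : S) i m : tw k a i m = fk k (a i m). Proof. by []. Qed.

Lemma twM k (a b : S) : tw k (a * b) = tw k a * tw k b.
Proof.
apply: funext => i; apply: funext => m; rewrite twE !smulE /sermul.
rewrite (big_morph _ (fkD k) (fk0 k)); apply: eq_bigr => k' _.
rewrite (big_morph _ (fkD k) (fk0 k)); apply: eq_bigr => mu _.
by rewrite fkM.
Qed.
Lemma twD k (a b : S) : tw k (a + b) = tw k a + tw k b.
Proof. by apply: funext => i; apply: funext => m; rewrite twE /= /seradd fkD. Qed.
Lemma tw0 k : tw k 0 = 0.
Proof. by apply: funext => i; apply: funext => m; rewrite twE szeroE /ser0 fk0. Qed.
Lemma tw1 k : tw k 1 = 1.
Proof.
apply: funext => i; apply: funext => m; rewrite twE soneE /ser1.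
by case: ifP => _; rewrite ?fk1 ?fk0.
Qed.
Lemma twN k (a : S) : tw k (- a) = - tw k a.
Proof. by apply: funext => i; apply: funext => m; rewrite twE /= /seropp fkN. Qed.
Lemma tw_sum k (I : Type) (rr : seq I) (P : pred I) (G : I -> S) :
  tw k (\sum_(i <- rr | P i) G i) = \sum_(i <- rr | P i) tw k (G i).
Proof. exact: (big_morph _ (twD k) (tw0 k)). Qed.
Lemma tw_inj k (a b : S) : tw k a = tw k b -> a = b.
Proof.
move=> H; apply: funext => i; apply: funext => m; apply: (@fk_inj k).
by rewrite -!twE H.
Qed.

Lemma twistm_matmul k (P Q : M) :
  twistm q k (matmul P Q) = matmul (twistm q k P) (twistm q k Q).
Proof.
apply: funext => a; apply: funext => b.
rewrite /twistm -/(tw k _) !matmulE tw_sum; apply: eq_bigr => l _; exact: twM.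
Qed.

Lemma twistv_rowmul k (g : V) (P : M) :
  twistv q k (rowmul g P) = rowmul (twistv q k g) (twistm q k P).
Proof.
apply: funext => a.
rewrite /twistv -/(tw k _) !rowmulE tw_sum; apply: eq_bigr => l _; exact: twM.
Qed.

Lemma twistm_idm k : twistm q k (@idm C s r) = @idm C s r.
Proof.
apply: funext => a; apply: funext => b; rewrite /twistm -/(tw k _) !idmE.
by case: eqP; rewrite ?tw1 ?tw0.
Qed.

End Twist.
Section Anal.
Variables (C : fieldType) (R : realType) (nrm : C -> R) (s : nat) (q : nat).
Hypothesis n_ge0 : forall x, 0 <= nrm x.
Hypothesis n0 : nrm 0 = 0.
Hypothesis n_eq0 : forall x, nrm x = 0 -> x = 0.
Hypothesis nM : forall x y, nrm (x * y) = nrm x * nrm y.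
Hypothesis nU : forall x y, nrm (x + y) <= Num.max (nrm x) (nrm y).
Hypothesis q_ge1 : (1 <= q)%N.
Local Notation T := (tser C s).
Local Notation S := (sring C s).
Local Notation qR := (q%:R : R).

Lemma nrm1 : nrm 1 = 1.
Proof.
have h : nrm 1 * nrm 1 = nrm 1 * 1 by rewrite -nM mulr1 mulr1.
have nz : nrm 1 != 0 by apply/eqP => /n_eq0 /eqP; rewrite oner_eq0.
by apply: (mulfI nz).
Qed.

Lemma nrmX x n : nrm (x ^+ n) = nrm x ^+ n.
Proof. by elim: n => [|n IH]; rewrite ?expr0 ?nrm1 // !exprS nM IH. Qed.

Lemma nrm_sum_le (I : Type) (rr : seq I) (P : pred I) (G : I -> C) (e : R) :
  0 <= e -> (forall i, P i -> nrm (G i) <= e) -> nrm (\sum_(i <- rr | P i) G i) <= e.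
Proof.
move=> e0 H; apply: (big_ind (fun x => nrm x <= e)) => //; first by rewrite n0.
by move=> x y hx hy; apply: le_trans (nU x y) _; rewrite ge_max hx hy.
Qed.

Lemma nrm_sum_lt (I : Type) (rr : seq I) (P : pred I) (G : I -> C) (e : R) :
  0 < e -> (forall i, P i -> nrm (G i) < e) -> nrm (\sum_(i <- rr | P i) G i) < e.
Proof.
move=> e0 H; apply: (big_ind (fun x => nrm x < e)) => //; first by rewrite n0.
by move=> x y hx hy; apply: le_lt_trans (nU x y) _; rewrite gt_max hx hy.
Qed.

Lemma fin_nat_bound (I : finType) (Q : I -> nat -> Prop) :
  (forall i N N', (N <= N')%N -> Q i N -> Q i N') ->
  (forall i, exists N, Q i N) -> exists N, forall i, Q i N.
Proof.
move=> mono H; have [f Hf] := fin_all_exists H.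
exists (\max_i f i)%N => i; apply: mono (Hf i); exact: leq_bigmax.
Qed.

Lemma fin_real_bound (I : finType) (Q : I -> R -> Prop) :
  (forall i K K', K <= K' -> Q i K -> Q i K') ->
  (forall i, exists K, Q i K) -> exists K, 0 <= K /\ forall i, Q i K.
Proof.
move=> mono H; have [f Hf] := fin_all_exists H.
exists (\sum_i `|f i|); split; first by apply: sumr_ge0 => i _.
move=> i; apply: mono (Hf i); rewrite (bigD1 i) //=.
apply: le_trans (ler_norm _) _; rewrite lerDl; exact: sumr_ge0.
Qed.

Lemma tate_bounded (b : midx s -> C) : tate_coef nrm b ->
  exists K, 0 <= K /\ forall m, nrm (b m) <= K.
Proof.
move=> /(_ 1 ltr01) [N HN].
exists (1 + \sum_(mu : {ffun 'I_s -> 'I_N.+1}) nrm (b (vb mu))); split.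
  by rewrite addr_ge0 // sumr_ge0.
move=> m; case: (boolP (bnd N m)) => Hb.
  rewrite -(vb_tobox Hb) (bigD1 (tobox N m)) //= addrCA lerDl addr_ge0 //.
  by rewrite sumr_ge0.
apply: le_trans (ltW (HN m _)) _.
  move: Hb; rewrite negb_forall => /existsP [j]; rewrite -ltnNge => Hj.
  by exists j; apply: ltnW.
by rewrite lerDl sumr_ge0.
Qed.

Lemma tate_add (f g : T) : tate_coef nrm f -> tate_coef nrm g -> tate_coef nrm (f + g).
Proof.
move=> Hf Hg e e0; have [Nf Hf'] := Hf e e0; have [Ng Hg'] := Hg e e0.
exists (maxn Nf Ng) => m [j Hj]; rewrite taddE.
apply: le_lt_trans (nU _ _) _; rewrite gt_max Hf' ?Hg' //.
  by exists j; apply: leq_trans Hj; rewrite leq_maxr.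
by exists j; apply: leq_trans Hj; rewrite leq_maxl.
Qed.

Lemma tate_0 : tate_coef nrm (0 : T).
Proof. by move=> e e0; exists 0%N => m _; rewrite tzeroE n0. Qed.

Lemma tate_mul (f g : T) : tate_coef nrm f -> tate_coef nrm g -> tate_coef nrm (f * g).
Proof.
move=> Hf Hg.
have [Kf [Kf0 HKf]] := tate_bounded Hf; have [Kg [Kg0 HKg]] := tate_bounded Hg.
pose K := Kf + Kg + 1.
have K0 : 0 < K by rewrite /K ltr_wpDl // addr_ge0.
move=> e e0; have eK : 0 < e / K by rewrite divr_gt0.
have [Nf Hf'] := Hf _ eK; have [Ng Hg'] := Hg _ eK.
exists (Nf + Ng)%N => m [j Hj]; rewrite tmulE /tmul.
apply: nrm_sum_lt => // mu _; rewrite nM.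
have bf : nrm (f (fun j => nat_of_ord (mu j))) <= K.
  by apply: le_trans (HKf _) _; rewrite /K -addrA lerDl addr_ge0.
have bg : nrm (g (fun j => (m j - mu j)%N)) <= K.
  by apply: le_trans (HKg _) _; rewrite /K addrAC lerDr addr_ge0.
case: (leqP Nf (mu j)) => Hmu.
  have := Hf' (fun j => nat_of_ord (mu j)) (ex_intro _ j Hmu); rewrite ltr_pdivlMr // => H1.
  apply: le_lt_trans H1; rewrite ler_wpM2l //.
have : (Ng <= m j - mu j)%N by lia.
move=> Hg2; have := Hg' (fun j => (m j - mu j)%N) (ex_intro _ j Hg2); rewrite ltr_pdivlMr // => H1.
apply: le_lt_trans H1; rewrite mulrC ler_wpM2l //.
Qed.

Lemma tate_sum (I : Type) (rr : seq I) (P : pred I) (G : I -> T) :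
  (forall i, P i -> tate_coef nrm (G i)) -> tate_coef nrm (\sum_(i <- rr | P i) G i).
Proof.
by move=> H; apply: (big_ind (fun f => tate_coef nrm f)) => //;
  [exact: tate_0 | exact: tate_add].
Qed.


Lemma qR_gt0 : 0 < qR. Proof. by rewrite ltr0n. Qed.
Lemma qX_gt0 i : 0 < qR ^+ i. Proof. by rewrite exprn_gt0 // qR_gt0. Qed.

Lemma Tz_bounded (a : ser C s) : in_Tz nrm q a ->
  exists M, 0 < M /\ forall i m, qR ^+ i * nrm (a i m) <= M.
Proof.
move=> [Ht Hz]; have [N0 HN0] := Hz 1 ltr01.
have [K [K0 HK]] : exists K, 0 <= K /\ forall i : 'I_N0, forall m, qR ^+ i * nrm (a i m) <= K.
  apply: (@fin_real_bound 'I_N0 (fun i K => forall m, qR ^+ i * nrm (a i m) <= K)).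
    by move=> i K K' le H m; apply: le_trans (H m) le.
  move=> i; have [K' [_ HK']] := tate_bounded (Ht i).
  by exists (qR ^+ i * K') => m; rewrite ler_wpM2l ?(ltW (qX_gt0 i)) ?HK'.
exists (K + 1); split; first by rewrite ltr_wpDl.
move=> i m; case: (ltnP i N0) => Hi.
  by apply: le_trans (HK (Ordinal Hi) m) _; rewrite lerDl.
by apply: le_trans (HN0 i Hi m) _; rewrite lerDr.
Qed.

Lemma tz_mul (a b : ser C s) : in_Tz nrm q a -> in_Tz nrm q b -> in_Tz nrm q (sermul a b).
Proof.
move=> Ha Hb; have [Hta Hza] := Ha; have [Htb Hzb] := Hb; split.
  move=> i; rewrite sermul_tsum; apply: tate_sum => k _; exact: tate_mul.
have [Ma [Ma0 HMa]] := Tz_bounded Ha; have [Mb [Mb0 HMb]] := Tz_bounded Hb.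
pose M := Ma + Mb; have M0 : 0 < M by rewrite addr_gt0.
move=> e e0; have eM : 0 < e / M by rewrite divr_gt0.
have [Na HNa] := Hza _ eM; have [Nb HNb] := Hzb _ eM.
exists (Na + Nb)%N => i Hi m.
rewrite mulrC -ler_pdivlMr ?qX_gt0 //.
rewrite /sermul; apply: nrm_sum_le; first by rewrite divr_ge0 // ?ltW ?qX_gt0.
move=> k _; apply: nrm_sum_le; first by rewrite divr_ge0 // ?ltW ?qX_gt0.
move=> mu _; rewrite nM ler_pdivlMr ?qX_gt0 //.
have ki : (k <= i)%N by rewrite -ltnS.
have E : qR ^+ i = qR ^+ k * qR ^+ (i - k) by rewrite -exprD subnKC.
rewrite E mulrACA [nrm (a _ _) * _]mulrC [nrm (b _ _) * _]mulrC.
rewrite -(divfK (lt0r_neq0 M0) e).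
case: (leqP Na k) => Hk.
  apply: ler_pM; rewrite ?mulr_ge0 ?exprn_ge0 ?ler0n //.
    exact: HNa.
  by apply: le_trans (HMb _ _) _; rewrite /M lerDr ltW.
rewrite [X in _ <= X]mulrC; apply: ler_pM; rewrite ?mulr_ge0 ?exprn_ge0 ?ler0n //.
  by apply: le_trans (HMa _ _) _; rewrite /M lerDl ltW.
apply: HNb; lia.
Qed.

Lemma tz_add (a b : ser C s) : in_Tz nrm q a -> in_Tz nrm q b -> in_Tz nrm q (seradd a b).
Proof.
move=> [Hta Hza] [Htb Hzb]; split.
  move=> i; exact: (tate_add (Hta i) (Htb i)).
move=> e e0; have [Na HNa] := Hza _ e0; have [Nb HNb] := Hzb _ e0.
exists (maxn Na Nb) => i Hi m; rewrite /seradd.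
have H1 := HNa i (leq_trans (leq_maxl _ _) Hi) m.
have H2 := HNb i (leq_trans (leq_maxr _ _) Hi) m.
rewrite mulrC -ler_pdivlMr ?qX_gt0 //; apply: le_trans (nU _ _) _.
by rewrite ge_max !ler_pdivlMr ?qX_gt0 // ![_ * qR ^+ i]mulrC H1 H2.
Qed.

Lemma tz_fin (a : ser C s) :
  (exists N, forall i (m : midx s), ((N <= i)%N \/ exists j, (N <= m j)%N) -> a i m = 0) ->
  in_Tz nrm q a.
Proof.
move=> [N HN]; split.
  move=> i e e0; exists N => m Hm; by rewrite HN ?n0 //; right.
move=> e e0; exists N => i Hi m; rewrite HN ?n0 ?mulr0 ?ltW //; by left.
Qed.

Lemma tz_zero : in_Tz nrm q (ser0 C s).
Proof. by apply: tz_fin; exists 0%N. Qed.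

Lemma tz_sum (I : Type) (rr : seq I) (P : pred I) (G : I -> S) :
  (forall i, P i -> in_Tz nrm q (G i)) -> in_Tz nrm q (\sum_(i <- rr | P i) G i).
Proof.
by move=> H; apply: (big_ind (fun f : S => in_Tz nrm q f)) => //;
  [exact: tz_zero | move=> x y; exact: tz_add].
Qed.

End Anal.
Section Levels.
Variables (C : fieldType) (s : nat).
Local Notation T := (tser C s).
Local Notation S := (sring C s).

Definition zfree (y : S) := forall i, i != 0%N -> (y i : T) = 0.

Lemma lvl_zfree (x y : S) i : zfree y -> ((x * y) i : T) = (x i : T) * (y 0%N : T).
Proof.
move=> Hy; rewrite smulE sermul_tsum big_ord_recr /= subnn big1 ?add0r // => k _.
by rewrite Hy ?mulr0 // subn_eq0 -ltnNge.
Qed.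

Lemma zfreeM (x y : S) : zfree x -> zfree y -> zfree (x * y).
Proof. by move=> Hx Hy i Hi; rewrite lvl_zfree // Hx // mul0r. Qed.

Lemma zfreeN (x : S) : zfree x -> zfree (- x).
Proof.
move=> Hx i Hi; have H := Hx i Hi; apply: funext => m.
have -> : ((- x : S) i : T) m = - (x i m) by [].
by rewrite -[x i m]/((x i : T) m) H /= oppr0.
Qed.

Lemma zfree_cst c : zfree (sercst s c).
Proof. by move=> i /negPf Hi; apply: funext => m; rewrite /sercst Hi. Qed.

Lemma lvl_z (x : S) i : ((x * serz C s) i.+1 : T) = x i.
Proof.
rewrite mulrC smulE sermul_tsum big_ord_recl big_ord_recl /=.
have -> : (serz C s 0%N : T) = 0 by [].
have -> : (serz C s 1%N : T) = 1 by [].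
rewrite mul0r add0r mul1r subn1 /= big1 ?addr0 // => k _.
have -> : (serz C s (bump 0 (bump 0 k)) : T) = 0.
  by apply: funext => m; rewrite /serz /bump /=.
by rewrite mul0r.
Qed.

End Levels.
Section Main.
Variables (F : finFieldType) (C : closedFieldType) (R : realType)
  (iota : {rmorphism F -> C}) (theta : C) (nrm : C -> R).
Hypothesis HC : Cinf_axioms iota theta nrm.
Variables (s r : nat) (A : nat -> ser C s) (Psi Psiinv : 'I_r -> 'I_r -> ser C s).
Hypothesis Hr : (0 < r)%N.
Hypothesis HA : forall k, (1 <= k <= r)%N -> in_T nrm (A k).
Hypothesis HAr : exists B, in_T nrm B /\ sermul (A r) B = ser1 C s.
Hypothesis HPsi : forall i j, in_Tz nrm #|F| (Psi i j).
Hypothesis HPsiinv : forall i j, in_Tz nrm #|F| (Psiinv i j).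
Hypothesis Hinv1 : matmul Psi Psiinv = @idm C s r.
Hypothesis Hinv2 : matmul Psiinv Psi = @idm C s r.
Hypothesis HPsiFrob : twistm #|F| 1 Psi = matmul (@Phi C s r #|F| theta A) Psi.

Local Notation q := #|F|.
Local Notation T := (tser C s).
Local Notation S := (sring C s).
Local Notation Ph := (@Phi C s r #|F| theta A).

Let n_ge0 := @nrm_ge0 F C R iota theta nrm HC.
Let n0 := @nrm0 F C R iota theta nrm HC.
Let n_eq0 := @nrm_eq0 F C R iota theta nrm HC.
Let nM := @nrmM F C R iota theta nrm HC.
Let nU := @nrm_ultra F C R iota theta nrm HC.
Let q1 : (1 <= q)%N := q_gt0 F.

Lemma K1 : matmul (twistm q 1 Psiinv) Ph = Psiinv.
Proof.
have H : matmul (matmul (twistm q 1 Psiinv) Ph) Psi = @idm C s r.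
  rewrite matmulA -HPsiFrob -(twistm_matmul iota).
  by transitivity (twistm q 1 (@idm C s r)); [congr (twistm _ _ _); exact: Hinv2 | exact: (twistm_idm iota)].
by rewrite -[LHS]matmul_idm -Hinv1 -matmulA H idm_matmul.
Qed.

Lemma K2 (f : 'I_r -> ser C s) : (forall j, in_Fqtz iota (f j)) -> twistv q 1 f = f.
Proof.
move=> Hf; apply: funext => j; apply: funext => i; apply: funext => m.
have [[c Hc] _] := (proj1 (Hf j) i m, tt).
by rewrite /twistv /twistinv /= Hc (fi_iota iota).
Qed.

Lemma small_iota c : nrm (iota c) < 1 -> iota c = 0.
Proof.
move=> H; apply/eqP; apply: contraLR H => Hne; rewrite -leNgt.
have c0 : c != 0 by apply: contra Hne => /eqP ->; rewrite rmorph0.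
have E : c ^+ q.-1 = 1.
  apply: (mulfI c0); rewrite mulr1 -exprS prednK ?expf_card //.
have : nrm (iota c) ^+ q.-1 = 1 by rewrite -(nrmX n_eq0 nM) -rmorphXn E rmorph1 (nrm1 n_eq0 nM).
move=> E2; rewrite leNgt; apply/negP => lt1.
have := exprn_ilt1 q.-1 (n_ge0 _) lt1; rewrite E2 ltxx.
by have := finNzRing_gt1 F; case: (q) => [|[]].
Qed.

Lemma fixed_fin (a : ser C s) : in_Tz nrm q a ->
  (forall i m, exists c, a i m = iota c) -> in_Fqtz iota a.
Proof.
move=> [Ht Hz] Hc; split => //.
have h2 : (0 : R) < 2^-1 by rewrite invr_gt0 ltr0n.
have [N0 HN0] := Hz _ h2.
have big i m : (N0 <= i)%N -> a i m = 0.
  move=> Hi; have [c E] := Hc i m; rewrite E; apply: small_iota; rewrite -E.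
  have h21 : (2^-1 : R) < 1 by rewrite invf_lt1 // ltr1n.
  apply: le_lt_trans h21; apply: le_trans (HN0 i Hi m).
  by rewrite -[X in X <= _]mul1r ler_wpM2r ?n_ge0 // exprn_ege1 // ler1n.
have [Nt HNt] : exists N, forall i : 'I_N0, forall m, (exists j, (N <= m j)%N) -> a i m = 0.
  apply: (@fin_nat_bound 'I_N0 (fun i N => forall m, (exists j, (N <= m j)%N) -> a i m = 0)).
    move=> i N N' le H m [j Hj]; apply: H; exists j; exact: leq_trans le Hj.
  move=> i; have [N HN] := Ht i 1 ltr01; exists N => m Hm.
  have [c E] := Hc i m; rewrite E; apply: small_iota; rewrite -E; exact: HN.
exists (maxn N0 Nt) => i m [Hi|[j Hj]].
  by apply: big; apply: leq_trans Hi; rewrite leq_maxl.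
case: (ltnP i N0) => Hi; last exact: big.
by apply: (HNt (Ordinal Hi)); exists j; apply: leq_trans Hj; rewrite leq_maxr.
Qed.


Let tzM := @tz_mul _ _ _ s _ n_ge0 n0 nM nU q1.
Let tzS := @tz_sum _ _ _ s _ n0 nU q1.

Lemma partA_fwd (g : 'I_r -> ser C s) : Vphi nrm q theta A g ->
  exists f, (forall j, in_Fqtz iota (f j)) /\ g = rowmul f Psiinv.
Proof.
move=> [Hg He]; exists (rowmul g Psi); split.
  move=> j; apply: fixed_fin.
    by rewrite rowmulE; apply: tzS => k _; apply: tzM.
  move=> i m.
  have Hfix : twistv q 1 (rowmul g Psi) = rowmul g Psi.
    by rewrite (twistv_rowmul iota) HPsiFrob -rowmul_matmul He.
  have := congr1 (fun v => v j i m) Hfix => /= E.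
  exact: (fi_fixed iota E).
by rewrite rowmul_matmul Hinv1 rowmul_idm.
Qed.

Lemma partA_bwd (f : 'I_r -> ser C s) : (forall j, in_Fqtz iota (f j)) ->
  Vphi nrm q theta A (rowmul f Psiinv).
Proof.
move=> Hf; split.
  move=> j; rewrite rowmulE; apply: tzS => k _; apply: tzM => //.
  by apply: (tz_fin q n0); exact: (proj2 (Hf k)).
by rewrite (twistv_rowmul iota) (K2 Hf) rowmul_matmul K1.
Qed.

Lemma partB_uniq (c c' : 'I_r -> ser C s) :
  rowmul c Psiinv = rowmul c' Psiinv -> c = c'.
Proof.
move=> H.
by rewrite -[c]rowmul_idm -[c']rowmul_idm -Hinv2 -!rowmul_matmul H.
Qed.


Lemma partC (g : 'I_r -> ser C s) : Vphi nrm q theta A g ->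
  (forall j, in_Tpolz nrm (g j)) -> g = (fun _ => ser0 C s).
Proof.
move=> [_ He] Hp.
set w := twistv q 1 g.
have lrP : (r.-1 < r)%N by rewrite prednK.
pose lr : 'I_r := Ordinal lrP.
pose j0 : 'I_r := Ordinal Hr.
set Ap : S := twistinv q r (A r).
set d : S := tinv Ap.
have Geq j : (g j : S) = \sum_(k < r) (w k : S) * Ph k j by rewrite -rowmulE He.
have PhiO (k j : 'I_r) : k != lr -> (Ph k j : S) = if (j == k.+1 :> nat) then 1 else 0.
  move=> Hk; rewrite /Phi ifT //.
  have : (nat_of_ord k != r.-1) by [].
  have := Hr.
  by move: (ltn_ord k); lia.
have Phi_l j : (Ph lr j : S) = if (j == 0%N :> nat) then
     (((serz C s : S) + sercst s (- theta)) * d : S) else ((- (twistinv q j (A j) : S)) * d : S).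
  by rewrite /Phi ifF //= prednK // ltnn.
have E0 : (g j0 : S) = (w lr : S) * (((serz C s : S) + sercst s (- theta)) * d).
  rewrite Geq (bigD1 lr) //= big1 ?addr0; first by rewrite Phi_l.
  by move=> k Hk; rewrite PhiO // mulr0.
have Ej (j k : 'I_r) : val j = (val k).+1 ->
    (g j : S) = (w k : S) + (w lr : S) * ((- (twistinv q j (A j) : S)) * d).
  move=> Hjk; have Hk : k != lr.
    apply/eqP => Ek; move: (ltn_ord j); rewrite Hjk Ek /= prednK //; lia.
  have Hj : (val j == 0%N) = false by rewrite Hjk.
  rewrite Geq (bigD1 lr) //= (bigD1 k) //=.
  rewrite Phi_l Hj PhiO // Hjk eqxx mulr1 big1 ?addr0; first by rewrite addrC.
  move=> k' /andP[Hk' Hkk']; rewrite PhiO //.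
  have -> : (val j == (val k').+1) = false.
    by apply/negbTE; rewrite Hjk eqSS; apply: contra Hkk' => /eqP E; apply/eqP/val_inj.
  by rewrite mulr0.
have [B [HBT HB]] := HAr.
set Bp : S := twistinv q r B.
have ApBp : Ap * Bp = 1.
  have : tw F r ((A r : S) * B) = tw F r 1 by rewrite smulE HB.
  by rewrite (twM iota) (tw1 iota).
have Apd : Ap * d = 1.
  rewrite smulE /d /tinv soneE.
  apply: (epsilon_spec (inhabits (ser0 C s)) (fun b => sermul Ap b = ser1 C s)).
  by exists Bp.
have dE : d = Bp.
  by rewrite -[d]mulr1 -ApBp mulrA [d * Ap]mulrC Apd mul1r.
have zd : zfree d.
  move=> i Hi; rewrite dE; apply: funext => m.
  by rewrite /Bp /twistinv /= (proj2 HBT i (elimN eqP Hi) m); exact: (fk0 iota).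
have d0inv : (Ap 0%N : T) * (d 0%N : T) = 1.
  by rewrite -lvl_zfree // Apd soneE ser1_lvl.
have zal (j : 'I_r) : (0 < j)%N -> zfree (twistinv q j (A j)).
  move=> Hj i Hi; apply: funext => m.
  have HAj : in_T nrm (A j) by apply: HA; rewrite Hj /= ltnW.
  by rewrite /twistinv /= (proj2 HAj i (elimN eqP Hi) m); exact: (fk0 iota).
have wE k i m : w k i m = frobinv q (g k i m) by [].
have w0 k i : (g k i : T) = 0 -> (w k i : T) = 0.
  move=> H; apply: funext => m; rewrite wE.
  have -> : g k i m = 0 by rewrite -[g k i m]/((g k i : T) m) H.
  exact: (fi0 iota).
have lvlD (x y : S) i : ((x + y) i : T) = (x i : T) + (y i : T) by [].
pose Z i := forall j, (g j i : T) = 0.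
have step i : Z i.+1 -> Z i.
  move=> Zs.
  have wl : (w lr i : T) = 0.
    have := congr1 (fun x : S => (x i.+1 : T)) E0.
    rewrite /= Zs mulrDl mulrDr !mulrA lvlD !(lvl_zfree _ _ zd) lvl_z (lvl_zfree _ _ (zfree_cst _ _)).
    rewrite (w0 lr i.+1 (Zs lr)) mul0r mul0r addr0.
    move=> H; transitivity ((w lr i : T) * (d 0%N : T) * (Ap 0%N : T)).
      by rewrite -mulrA [(d 0%N : T) * _]mulrC d0inv mulr1.
    by rewrite -H mul0r.
  have gl : (g lr i : T) = 0.
    apply: funext => m; apply: (@fi_inj F C); rewrite (fi0 iota) -wE.
    by rewrite -[w lr i m]/((w lr i : T) m) wl.
  have chain n (Hn : (n < r)%N) : (g (Ordinal Hn) i : T) = fun m => fk F n (g j0 i m).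
    elim: n Hn => [|n IH] Hn.
      by apply: funext => m; congr (g _ i m); apply: val_inj.
    have Hn' : (n < r)%N by apply: ltnW.
    have := congr1 (fun x : S => (x i : T)) (Ej (Ordinal Hn) (Ordinal Hn') erefl).
    rewrite /= lvlD lvl_zfree; last by apply: zfreeM => //; apply: zfreeN; apply: (zal (Ordinal Hn)).
    rewrite wl mul0r addr0 => ->; apply: funext => m.
    by rewrite wE -[g _ i m]/((g (Ordinal Hn') i : T) m) IH.
  have g0 m : g j0 i m = 0.
    have := congr1 (fun f => f m) (chain _ lrP).
    have -> : Ordinal lrP = lr by [].
    rewrite gl /= => /esym H; apply: (@fk_inj F C r.-1); rewrite H (fk0 iota); by [].
  move=> j; have -> : j = Ordinal (ltn_ord j) by apply: val_inj.
  by rewrite chain; apply: funext => m; rewrite g0 (fk0 iota).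
have [N HN] : exists N, forall j : 'I_r, forall i, (N <= i)%N -> forall m, g j i m = 0.
  apply: (@fin_nat_bound 'I_r (fun j N => forall i, (N <= i)%N -> forall m, g j i m = 0)).
    move=> j N N' le H i Hi; apply: H; exact: leq_trans le Hi.
  by move=> j; have [_ [N HN]] := Hp j; exists N.
have ZN i : (N <= i)%N -> Z i by move=> Hi j; apply: funext => m; exact: HN.
have Zall i : Z i.
  case: (leqP N i) => Hi; first exact: ZN.
  have : forall n, Z (N - n)%N.
    elim=> [|n IH]; first by apply: ZN; rewrite subn0.
    case: (ltnP n N) => Hn.
      apply: step; have -> : (N - n.+1).+1 = (N - n)%N by lia.
      exact: IH.
    have -> : (N - n.+1)%N = (N - n)%N by lia.
    exact: IH.
  by move/(_ (N - i)%N); rewrite subKn // ltnW.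
apply: funext => j; apply: funext => i; apply: funext => m.
by rewrite -[g j i m]/((g j i : T) m) Zall.
Qed.
End Main.
Unset Implicit Arguments.
Set Strict Implicit.

Theorem proposition4p14
  (F : finFieldType) (C : closedFieldType) (R : realType)
  (iota : {rmorphism F -> C}) (theta : C) (nrm : C -> R)
  (HC : Cinf_axioms iota theta nrm)
  (s r : nat) (Hr : (0 < r)%N) (A : nat -> ser C s)
  (HA : forall k, (1 <= k <= r)%N -> in_T nrm (A k))
  (HAr : exists B, in_T nrm B /\ sermul (A r) B = ser1 C s)
  (Psi Psiinv : 'I_r -> 'I_r -> ser C s)
  (HPsi : forall i j, in_Tz nrm #|F| (Psi i j))
  (HPsiinv : forall i j, in_Tz nrm #|F| (Psiinv i j))
  (Hinv1 : matmul Psi Psiinv = @idm C s r)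
  (Hinv2 : matmul Psiinv Psi = @idm C s r)
  (HPsiFrob : twistm #|F| 1 Psi = matmul (@Phi C s r #|F| theta A) Psi) :
  (* (a) V_phi = Mat_{1 x r}(F_q[t][z]) Psi^{-1} *)
  (forall g : 'I_r -> ser C s,
     Vphi nrm #|F| theta A g <->
     exists f : 'I_r -> ser C s,
       (forall j, in_Fqtz iota (f j)) /\ g = rowmul f Psiinv) /\
  (* (b) V_phi is a free F_q[t][z]-module of rank r *)
  (exists b : 'I_r -> 'I_r -> ser C s,
     (forall c : 'I_r -> ser C s, (forall k, in_Fqtz iota (c k)) ->
        Vphi nrm #|F| theta A (lincomb c b)) /\
     (forall g, Vphi nrm #|F| theta A g ->
        exists c : 'I_r -> ser C s,
          (forall k, in_Fqtz iota (c k)) /\ g = lincomb c b /\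
          forall c' : 'I_r -> ser C s, (forall k, in_Fqtz iota (c' k)) ->
             g = lincomb c' b -> c' = c)) /\
  (* (c) V_phi meets Mat_{1 x r}(T_s[z]) only in 0 *)
  (forall g : 'I_r -> ser C s,
     Vphi nrm #|F| theta A g -> (forall j, in_Tpolz nrm (g j)) ->
     g = (fun _ => ser0 C s)).
Proof.
have fwd g : Vphi nrm #|F| theta A g ->
    exists f, (forall j, in_Fqtz iota (f j)) /\ g = rowmul f Psiinv.
  exact: (partA_fwd HC HPsi Hinv1 HPsiFrob).
have bwd f : (forall j, in_Fqtz iota (f j)) -> Vphi nrm #|F| theta A (rowmul f Psiinv).
  exact: (partA_bwd HC HPsiinv Hinv1 Hinv2 HPsiFrob).
split.
  move=> g; split; first exact: fwd.
  by move=> [f [Hf ->]]; apply: bwd.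
split.
  exists Psiinv; split; first by move=> c Hc; apply: bwd.
  move=> g Hg; have [f [Hf Eg]] := fwd g Hg.
  exists f; split => //; split => // c' Hc' Eg'.
  apply: (partB_uniq Hinv2).
  by rewrite -[rowmul c' Psiinv]/(lincomb c' Psiinv) -Eg' Eg.
move=> g Hg Hp; exact: (partC iota Hr HA HAr Hg Hp).
Qed.
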